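(* Let $G$ be a planar graph with a fixed plane embedding and coloring $\sigma$ such that $(G,\sigma)$ is color-connected, and let $(G^*,\sigma)$ be the colored dual graph. Then $(G^*,\sigma)$ is color-connected, i.e. for every color $c$ the set of dual vertices $v^*$ with $c\in\sigma(v^* )$ induces a connected subgraph of $G^*$.
   Context: $\sigma:V\to 2^{[m]}$; $(G,\sigma)$ is color-connected if for each color $c$ the vertices of $G$ whose color set contains $c$ induce a connected subgraph. $G^*$ is the planar dual of the embedded $G$ (one vertex per face, one dual edge $e^*$ crossing each edge $e$). Colored dual: for an edge $e=uv$ of $G$, $\sigma(e)=\sigma(u)\cup\sigma(v)$ and $\sigma(e^* )=\sigma(e)$; for a dual vertex $v^*$, $\sigma(v^* )$ is the union of $\sigma(e^* )$ over all dual edges $e^*$ incident to $v^*$ (equivalently, the union of $\sigma(v)$ over the vertices $v$ on the boundary of the corresponding face). *)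

(* Defs.v *)
From mathcomp Require Import all_boot all_order.
From mathcomp Require Import fingroup perm.
Set Implicit Arguments. Unset Strict Implicit. Unset Printing Implicit Defensive.

(* A plane embedding of a graph, given combinatorially by a rotation system
   (combinatorial map): darts D, each dart d has a tail vertex [tail d];
   [alpha] is the fixed-point-free involution pairing the two darts of an
   edge; [rho] is the cyclic order (rotation) of darts around each vertex. *)
Section Map.
Variables (V D : finType) (tail : D -> V) (alpha : D -> D) (rho : {perm D}).

Definition gadj : rel V := fun u v => [exists d, (tail d == u) && (tail (alpha d) == v)].

Definition phi (d : D) : D := rho (alpha d).
Definition face (d : D) : {set D} := [set e | fconnect phi d e].
Definition faces : {set {set D}} := [set face d | d : D].

Definition rotation_system : Prop :=
  [/\ forall d, alpha (alpha d) = d,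
      forall d, alpha d != d,
      forall d, tail (rho d) = tail d &
      forall d e, tail d = tail e -> fconnect rho d e].

Definition simple_map : Prop :=
  (forall d, tail (alpha d) != tail d) /\
  (forall d e, tail d = tail e -> tail (alpha d) = tail (alpha e) -> d = e).

Definition connected_graph : Prop := forall u v : V, connect gadj u v.

(* genus 0 : Euler's formula V - E + F = 2 (E = #|D| / 2) *)
Definition genus0 : Prop := #|V| + #|faces| = #|D| %/ 2 + 2.

Definition plane_map : Prop := [/\ rotation_system, simple_map, connected_graph & genus0].

Variable m : nat.
Variable sigma : V -> {set 'I_m}.

Definition sigma_edge (d : D) : {set 'I_m} := sigma (tail d) :|: sigma (tail (alpha d)).

Definition color_connected : Prop :=
  forall c : 'I_m, forall u v : V, c \in sigma u -> c \in sigma v ->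
    connect (fun x y => [&& c \in sigma x, c \in sigma y & gadj x y]) u v.

(* dual graph: vertices = faces; one dual edge (crossing the edge of d)
   joins face d and face (alpha d) *)
Definition dadj : rel {set D} :=
  fun f g => [exists d, (face d == f) && (face (alpha d) == g)].

Definition sigma_dual (f : {set D}) : {set 'I_m} :=
  \bigcup_(d in D | face d == f) sigma_edge d.

Definition dual_color_connected : Prop :=
  forall c : 'I_m, forall f g : {set D}, f \in faces -> g \in faces ->
    c \in sigma_dual f -> c \in sigma_dual g ->
    connect (fun x y => [&& x \in faces, y \in faces,
                            c \in sigma_dual x, c \in sigma_dual y & dadj x y]) f g.
End Map.

(* Main.v *)
Require Import Defs.
From mathcomp Require Import all_boot all_order.
From mathcomp Require Import fingroup perm.
Set Implicit Arguments. Unset Strict Implicit. Unset Printing Implicit Defensive.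

Section Proof.
Variables (V D : finType) (tail : D -> V) (alpha : D -> D) (rho : {perm D}).
Variables (m : nat) (sigma : V -> {set 'I_m}).
Hypothesis Haa : forall d, alpha (alpha d) = d.
Hypothesis Htr : forall d, tail (rho d) = tail d.
Hypothesis Hrot : forall d e, tail d = tail e -> fconnect rho d e.
Variable c : 'I_m.

Let R := fun x y => [&& x \in faces alpha rho, y \in faces alpha rho,
   c \in sigma_dual tail alpha rho sigma x, c \in sigma_dual tail alpha rho sigma y
   & dadj alpha rho x y].

Lemma phi_inj : injective (phi alpha rho).
Proof.
move=> x y; rewrite /phi => /perm_inj H.
by rewrite -(Haa x) H Haa.
Qed.

Lemma face_phi x : face alpha rho (phi alpha rho x) = face alpha rho x.
Proof.
apply/setP => e; rewrite !inE.
have h1 : fconnect (phi alpha rho) x (phi alpha rho x) by apply: fconnect1.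
apply/idP/idP => h.
  exact: connect_trans h1 h.
by rewrite fconnect_sym in h1; [exact: connect_trans h1 h | exact: phi_inj].
Qed.

Lemma face_rho d : face alpha rho (rho d) = face alpha rho (alpha d).
Proof. by rewrite -[in RHS]face_phi /phi Haa. Qed.

Lemma in_faces d : face alpha rho d \in faces alpha rho.
Proof. exact: imset_f. Qed.

Lemma sd_tail d : c \in sigma (tail d) -> c \in sigma_dual tail alpha rho sigma (face alpha rho d).
Proof.
move=> h; apply/bigcupP; exists d; first by rewrite eqxx.
by rewrite /sigma_edge inE h.
Qed.

Lemma sd_tail_alpha d : c \in sigma (tail (alpha d)) ->
  c \in sigma_dual tail alpha rho sigma (face alpha rho d).
Proof.
move=> h; apply/bigcupP; exists d; first by rewrite eqxx.
by rewrite /sigma_edge inE h orbT.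
Qed.

Lemma dadj_d d : dadj alpha rho (face alpha rho d) (face alpha rho (alpha d)).
Proof. by apply/existsP; exists d; rewrite !eqxx. Qed.

Lemma R_sym : connect_sym R.
Proof.
apply: sym_connect_sym => x y; rewrite /R.
suff H : forall x y, dadj alpha rho x y -> dadj alpha rho y x.
  by apply/idP/idP => /and5P [a b c1 d1 e]; apply/and5P; split => //; apply: H.
move=> f g /existsP [d /andP [/eqP <- /eqP <-]].
by apply/existsP; exists (alpha d); rewrite Haa !eqxx.
Qed.

Lemma R_edge d : c \in sigma (tail (alpha d)) ->
  connect R (face alpha rho d) (face alpha rho (alpha d)).
Proof.
move=> h; apply: connect1; rewrite /R !in_faces dadj_d sd_tail_alpha //.
by rewrite sd_tail.
Qed.

Lemma R_vertex d e : c \in sigma (tail d) -> tail d = tail e ->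
  connect R (face alpha rho d) (face alpha rho e).
Proof.
move=> hc /Hrot /iter_findex <-; move: (findex _ _ _) => n.
elim: n => [|n IH] //=.
apply: connect_trans IH _; apply: connect1.
have ht : tail (iter n rho d) = tail d.
  by elim: (n) => //= k IHk; rewrite Htr.
rewrite /R !in_faces sd_tail ?ht //= sd_tail ?Htr ?ht //=.
by rewrite face_rho dadj_d.
Qed.

Hypothesis Hcc : color_connected tail alpha sigma.

Lemma R_verts d e : c \in sigma (tail d) -> c \in sigma (tail e) ->
  connect R (face alpha rho d) (face alpha rho e).
Proof.
move=> hd he; have := Hcc hd he => /connectP [p Hp Hl].
elim: p d hd Hp Hl => [|y p IH] d hd /=.
  by move=> _ Hl; apply: R_vertex.
case/andP => /and3P [_ hy /existsP [d0 /andP [/eqP t0 /eqP t1]]] Hp Hl.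
apply: (connect_trans (R_vertex hd (esym t0))).
apply: connect_trans (R_edge _) _; first by rewrite t1.
apply: IH => //; by rewrite t1.
Qed.

Lemma get_tail f : f \in faces alpha rho ->
  c \in sigma_dual tail alpha rho sigma f ->
  exists d, c \in sigma (tail d) /\ connect R f (face alpha rho d).
Proof.
move=> _ /bigcupP [d /andP [_ /eqP <-]]; rewrite /sigma_edge inE => /orP [h|h].
  by exists d.
by exists (alpha d); split => //; apply: R_edge.
Qed.

End Proof.

Theorem lemma3p3 (V D : finType) (tail : D -> V) (alpha : D -> D) (rho : {perm D})
  (m : nat) (sigma : V -> {set 'I_m}) :
  plane_map tail alpha rho ->
  color_connected tail alpha sigma ->
  dual_color_connected tail alpha rho sigma.
Proof.
case=> [[Haa _ Htr Hrot] _ _ _] Hcc c f g Hf Hg cf cg.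
have [d [hd Hd]] := @get_tail _ _ tail alpha rho _ sigma c f Hf cf.
have [e [he He]] := @get_tail _ _ tail alpha rho _ sigma c g Hg cg.
apply: connect_trans Hd _.
apply: connect_trans (@R_verts _ _ tail alpha rho _ sigma Haa Htr Hrot c Hcc d e hd he) _.
by rewrite (@R_sym _ _ tail alpha rho _ sigma Haa c).
Qed.
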